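(* Let $n$ entities move in $\mathbb{R}^d$ along piecewise-linear trajectories with vertices at common times $t_0<\dots<t_\tau$, and let $D_\sigma(t)=\max_\psi\|\sigma(t)\psi(t)\|$. The total number of intersections among the functions $D_\sigma$, $\sigma$ ranging over the entities, is $O(\tau n^3)$; here an intersection is a pair $\{\sigma,\psi\}$ together with a time $t$ such that $D_\sigma(t)=D_\psi(t)$ and $t$ is an isolated point of $\{s: D_\sigma(s)=D_\psi(s)\}$.
   Context: $\|pq\|$ denotes Euclidean distance. *)

(* Defs.v *)
From Stdlib Require Import Reals Lra List.
Open Scope R_scope.

(* Points of R^d are represented as functions nat -> R; only coordinates
   0..d-1 matter. *)
Definition point := nat -> R.

Fixpoint sumR (m : nat) (f : nat -> R) : R :=
  match m with
  | O => 0
  | S m' => sumR m' f + f m'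
  end.

Definition dist (d : nat) (x y : point) : R :=
  sqrt (sumR d (fun k => (x k - y k) ^ 2)).

(* max_{j < m} f j  (0 if m = 0; all values used here are >= 0) *)
Fixpoint maxR (m : nat) (f : nat -> R) : R :=
  match m with
  | O => 0
  | S m' => Rmax (maxR m' f) (f m')
  end.

Definition Dfun (d n : nat) (pos : nat -> R -> point) (sigma : nat) (t : R) : R :=
  maxR n (fun psi => dist d (pos sigma t) (pos psi t)).

Definition piecewise_linear (d n tau : nat) (times : nat -> R)
    (pos : nat -> R -> point) : Prop :=
  forall sigma i s k, (sigma < n)%nat -> (i < tau)%nat -> (k < d)%nat ->
    times i <= s <= times (S i) ->
    pos sigma s k =
      ((times (S i) - s) * pos sigma (times i) k
        + (s - times i) * pos sigma (times (S i)) k)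
      / (times (S i) - times i).

(* ({sigma, psi}, t) is an intersection: sigma < psi < n (unordered pair),
   t in the time domain [times 0, times tau], D_sigma(t) = D_psi(t), and t is an
   isolated point of {s in [times 0, times tau] : D_sigma(s) = D_psi(s)}. *)
Definition is_intersection (d n tau : nat) (times : nat -> R)
    (pos : nat -> R -> point) (sigma psi : nat) (t : R) : Prop :=
  (sigma < psi)%nat /\ (psi < n)%nat /\
  times 0%nat <= t <= times tau /\
  Dfun d n pos sigma t = Dfun d n pos psi t /\
  exists eps, 0 < eps /\
    forall s, times 0%nat <= s <= times tau -> Rabs (s - t) < eps -> s <> t ->
      Dfun d n pos sigma s <> Dfun d n pos psi s.

(* Main.v *)
Require Import Defs.
From Stdlib Require Import Reals List.
From Stdlib Require Import Lra Lia Classical.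
Open Scope R_scope.

Lemma maxR_ge0 : forall m f, 0 <= maxR m f.
Proof. induction m; simpl; intros. lra. eapply Rle_trans; [apply IHm|apply Rmax_l]. Qed.

Lemma maxR_ge : forall m f x, (x < m)%nat -> f x <= maxR m f.
Proof.
  induction m; simpl; intros. lia.
  destruct (Nat.eq_dec x m). subst. apply Rmax_r.
  eapply Rle_trans; [apply IHm; lia|apply Rmax_l].
Qed.

Lemma maxR_att : forall m f, (1 <= m)%nat -> (forall x, (x < m)%nat -> 0 <= f x) ->
  exists x, (x < m)%nat /\ maxR m f = f x.
Proof.
  induction m; simpl; intros. lia.
  destruct m.
  - exists 0%nat. split. lia. simpl. apply Rmax_right. apply H0; lia.
  - destruct (IHm f) as [x [Hx Hm]]. lia. intros; apply H0; lia.
    unfold Rmax. destruct (Rle_dec (maxR (S m) f) (f (S m))).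
    exists (S m). split; auto.
    exists x. split; auto.
Qed.

Lemma maxR_ext : forall m f g, (forall x, (x < m)%nat -> f x = g x) -> maxR m f = maxR m g.
Proof.
  induction m; simpl; intros; auto. rewrite (IHm f g), H; auto.
Qed.

Lemma sumR_ext : forall m f g, (forall x, (x < m)%nat -> f x = g x) -> sumR m f = sumR m g.
Proof.
  induction m; simpl; intros; auto. rewrite (IHm f g), H; auto.
Qed.

Lemma sumR_ge0 : forall m f, (forall x, 0 <= f x) -> 0 <= sumR m f.
Proof. induction m; simpl; intros. lra. assert (H1 := H m). specialize (IHm f H). lra. Qed.

Lemma maxR_sqrt : forall m f, (forall x, 0 <= f x) ->
  maxR m (fun x => sqrt (f x)) = sqrt (maxR m f).
Proof.
  induction m; simpl; intros. symmetry; apply sqrt_0.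
  rewrite IHm; auto.
  assert (H0 := maxR_ge0 m f). assert (H1 := H m).
  unfold Rmax. destruct (Rle_dec (sqrt (maxR m f)) (sqrt (f m))),
    (Rle_dec (maxR m f) (f m)); auto.
  - apply Rle_antisym; auto. apply sqrt_le_1; lra.
  - exfalso. apply n. apply sqrt_le_1; lra.
Qed.

Definition isquad (f : R -> R) := exists A B C, forall t, f t = A * t ^ 2 + B * t + C.

Lemma three_roots : forall A B C x y z, x <> y -> y <> z -> x <> z ->
  A * x^2 + B * x + C = 0 -> A * y^2 + B * y + C = 0 -> A * z^2 + B * z + C = 0 ->
  A = 0 /\ B = 0 /\ C = 0.
Proof.
  intros.
  assert (E1 : A * (x + y) + B = 0).
  { apply Rmult_eq_reg_r with (x - y). 2: lra. replace ((A * (x + y) + B) * (x - y)) with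
      ((A * x^2 + B * x + C) - (A * y^2 + B * y + C)) by ring. lra. }
  assert (E2 : A * (x + z) + B = 0).
  { apply Rmult_eq_reg_r with (x - z). 2: lra. replace ((A * (x + z) + B) * (x - z)) with
      ((A * x^2 + B * x + C) - (A * z^2 + B * z + C)) by ring. lra. }
  assert (A = 0).
  { apply Rmult_eq_reg_r with (y - z). 2: lra. replace (A * (y - z)) with
      ((A * (x + y) + B) - (A * (x + z) + B)) by ring. lra. }
  subst. split; auto. assert (B = 0) by lra. subst. split; auto. lra.
Qed.

Definition P3 (f g : R -> R) := forall t1 t2 t3, t1 <> t2 -> t2 <> t3 -> t1 <> t3 ->
  f t1 = g t1 -> f t2 = g t2 -> f t3 = g t3 -> forall t, f t = g t.

Lemma isquad_P3 : forall f g, isquad (fun t => f t - g t) -> P3 f g.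
Proof.
  intros f g [A [B [C H]]] t1 t2 t3 ? ? ? ? ? ? t.
  destruct (three_roots A B C t1 t2 t3) as [? [? ?]]; auto.
  rewrite <- H; lra. rewrite <- H; lra. rewrite <- H; lra.
  subst. specialize (H t). lra.
Qed.

Lemma isquad_sub : forall f g, isquad f -> isquad g -> isquad (fun t => f t - g t).
Proof.
  intros f g [A [B [C H]]] [A' [B' [C' H']]]. exists (A - A'), (B - B'), (C - C').
  intros; rewrite H, H'; ring.
Qed.

Lemma isquad_sumR : forall d (f : nat -> R -> R), (forall k, isquad (f k)) ->
  isquad (fun t => sumR d (fun k => f k t)).
Proof.
  induction d; simpl; intros.
  - exists 0, 0, 0. intros; ring.
  - destruct (IHd f H) as [A [B [C H1]]]. destruct (H d) as [A' [B' [C' H2]]].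
    exists (A + A'), (B + B'), (C + C'). intros; rewrite H1, H2; ring.
Qed.

Lemma isquad_sqlin : forall a b, isquad (fun t => (a + b * t) ^ 2).
Proof. intros. exists (b*b), (2*a*b), (a*a). intros; ring. Qed.

Lemma continuity_sumR : forall d (f : nat -> R -> R), (forall k, continuity (f k)) ->
  continuity (fun t => sumR d (fun k => f k t)).
Proof.
  induction d; simpl; intros.
  - apply continuity_const. intros x y; auto.
  - apply continuity_plus. apply IHd; auto. apply H.
Qed.

Lemma isquad_cont : forall f, isquad f -> continuity f.
Proof.
  intros f [A [B [C H]]].
  assert (continuity (fun t => A * t ^ 2 + B * t + C)) by reg.
  intros x. unfold continuity_pt, continue_in, limit1_in, limit_in in *.
  intros eps Heps. destruct (H0 x eps Heps) as [a [Ha Hb]]. exists a. split; auto.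
  intros y Hy. rewrite !H. apply Hb; auto.
Qed.

Definition Ef (m : nat) (G : nat -> R -> R) t := maxR m (fun x => G x t).
Definition W (m : nat) (G : nat -> R -> R) t x :=
  (x < m)%nat /\ G x t = Ef m G t /\ forall y, (y < x)%nat -> G y t <> Ef m G t.
Definition famOK (m : nat) (al be : R) (G : nat -> R -> R) (B : list R) :=
  (1 <= m)%nat /\ (forall x t, 0 <= G x t) /\ (forall x, continuity (G x)) /\
  (forall x y, (x < m)%nat -> (y < m)%nat -> P3 (G x) (G y)) /\
  (forall x y t, (x < m)%nat -> (y < m)%nat -> al < t < be -> G x t = G y t ->
     (exists s, G x s <> G y s) -> In t B).

Lemma least_ex : forall (P : nat -> Prop) n, P n -> exists x, P x /\ forall y, (y < x)%nat -> ~ P y.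
Proof.
  intros P n. induction n as [n IH] using (well_founded_induction Wf_nat.lt_wf). intros Hn.
  destruct (classic (exists y, (y < n)%nat /\ P y)) as [[y [Hy Py]]|Hno].
  - apply (IH y Hy Py).
  - exists n. split; auto. intros y Hy Py. apply Hno; eauto.
Qed.

Lemma W_ex : forall m al be G B t, famOK m al be G B -> exists x, W m G t x.
Proof.
  intros m al be G B t [H1 [H2 _]].
  destruct (maxR_att m (fun x => G x t) H1) as [x [Hx He]]. intros; apply H2.
  destruct (least_ex (fun x => (x < m)%nat /\ G x t = Ef m G t) x) as [y [[Hy1 Hy2] Hy3]].
  split; auto.
  exists y. split; auto. split; auto. intros z Hz Hc. apply (Hy3 z Hz). split; auto. lia.
Qed.

Lemma W_uniq : forall m G t x y, W m G t x -> W m G t y -> x = y.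
Proof.
  intros m G t x y [? [? H1]] [? [? H2]].
  destruct (Nat.lt_total x y) as [h|[h|h]]; auto.
  - exfalso; eapply H2; eauto.
  - exfalso; eapply H1; eauto.
Qed.

Lemma W_strict : forall m al be G B t s x y, famOK m al be G B -> al < t < be -> ~ In t B ->
  W m G t x -> W m G s y -> x <> y -> G y t < G x t.
Proof.
  intros m al be G B t s x y HF Ht Hnb Wx Wy Hxy.
  destruct HF as [_ [_ [_ [_ HB]]]].
  destruct Wx as [Hx [Hx1 Hx2]]. destruct Wy as [Hy [Hy1 Hy2]].
  assert (G y t <= G x t). { rewrite Hx1. apply (maxR_ge m (fun z => G z t)). auto. }
  destruct H; auto. exfalso.
  destruct (classic (exists s, G x s <> G y s)) as [Hne|Hid].
  - apply Hnb. apply (HB x y t); auto.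
  - assert (Hid' : forall s, G x s = G y s).
    { intros u. destruct (Req_dec (G x u) (G y u)); auto. exfalso; apply Hid; eauto. }
    destruct (Nat.lt_total x y) as [h|[h|h]]; auto.
    + apply (Hy2 x h). rewrite Hid'. auto.
    + apply (Hx2 y h). rewrite H. auto.
Qed.

Lemma ivt0 : forall f x y, continuity f -> x < y -> f x * f y < 0 -> exists z, x < z < y /\ f z = 0.
Proof.
  intros f x y Hc Hxy Hm.
  destruct (Rlt_dec (f x) 0) as [Hn|Hn].
  - assert (0 < f y). { destruct (Rle_dec (f y) 0); auto. nra. lra. }
    destruct (IVT f x y Hc Hxy Hn H) as [z [[Hz1 Hz2] Hz3]].
    exists z. split; auto. split.
    destruct Hz1; auto. subst; lra. destruct Hz2; auto. subst; lra.
  - assert (0 < f x). { destruct (Req_dec (f x) 0). rewrite H in Hm; lra. lra. }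
    assert (f y < 0) by nra.
    assert (Hc' : continuity (fun t => - f t)) by (apply continuity_opp; auto).
    destruct (IVT (fun t => - f t) x y Hc' Hxy) as [z [[Hz1 Hz2] Hz3]]; try lra.
    exists z. split; [split|lra].
    destruct Hz1; auto. subst; lra. destruct Hz2; auto. subst; lra.
Qed.

Lemma cont_sub : forall f g, continuity f -> continuity g -> continuity (fun t => f t - g t).
Proof. intros. apply continuity_minus; auto. Qed.

Lemma const_free : forall m al be G B p q x y, famOK m al be G B ->
  al < p -> p < q -> q < be -> (forall r, p < r < q -> ~ In r B) -> ~ In p B -> ~ In q B ->
  W m G p x -> W m G q y -> x = y.
Proof.
  intros m al be G B p q x y HF H1 H2 H3 Hfree Hp Hq Wx Wy.
  destruct (Nat.eq_dec x y); auto. exfalso.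
  assert (A1 : G y p < G x p) by (eapply W_strict; eauto; lra).
  assert (A2 : G x q < G y q) by (eapply W_strict; eauto; lra).
  destruct HF as [Hm [Hg [Hc [H3' HB]]]].
  destruct (ivt0 (fun t => G x t - G y t) p q) as [z [Hz Hz0]]; auto.
  apply cont_sub; auto. nra.
  apply (Hfree z Hz). apply (HB x y z); try (apply Wx || apply Wy). lra. lra.
  exists p. lra.
Qed.

Lemma nonbad_in : forall B a b, a < b -> exists t, a < t < b /\ ~ In t B.
Proof.
  induction B as [|c B IH]; intros a b Hab.
  - exists ((a+b)/2). split. lra. auto.
  - destruct (IH a b Hab) as [t [Ht Hn]].
    destruct (Req_dec t c).
    + subst. destruct (IH a c) as [t' [Ht' Hn']]. lra. exists t'. split. lra.
      intros [h|h]; [lra|auto].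
    + exists t. split; auto. intros [h|h]; auto.
Qed.

Lemma free_nbhd : forall B r, exists d, 0 < d /\ forall p, 0 < Rabs (p - r) < d -> ~ In p B.
Proof.
  induction B as [|c B IH]; intros r.
  - exists 1. split. lra. auto.
  - destruct (IH r) as [d [Hd Hp]].
    destruct (Req_dec c r).
    + exists d. split; auto. intros p Hpr [h|h]; [subst; rewrite Rminus_diag, Rabs_R0 in Hpr; lra|].
      eapply Hp; eauto.
    + exists (Rmin d (Rabs (c - r))). split.
      apply Rmin_pos; auto. apply Rabs_pos_lt. lra.
      intros p Hpr [h|h].
      * subst. assert (Rmin d (Rabs (p - r)) <= Rabs (p - r)) by apply Rmin_r. lra.
      * apply (Hp p); auto. assert (Rmin d (Rabs (c - r)) <= d) by apply Rmin_l. lra.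
Qed.

Lemma const_int : forall m al be G B a' b' p q x y, famOK m al be G B ->
  al <= a' -> b' <= be -> (forall r, a' < r < b' -> ~ In r B) ->
  a' < p < b' -> a' < q < b' -> W m G p x -> W m G q y -> x = y.
Proof.
  intros. destruct (Rtotal_order p q) as [h|[h|h]].
  - eapply (const_free m al be G B p q); eauto; try lra;
    try (intros; apply H2; lra); apply H2; lra.
  - subst. eapply W_uniq; eauto.
  - symmetry. eapply (const_free m al be G B q p); eauto; try lra;
    try (intros; apply H2; lra); apply H2; lra.
Qed.

Definition LW m (al : R) G B r a := exists d, 0 < d /\
  forall p, r - d < p < r -> al < p -> ~ In p B -> W m G p a.
Definition RW m (be : R) G B r b := exists d, 0 < d /\
  forall p, r < p < r + d -> p < be -> ~ In p B -> W m G p b.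

Lemma LW_ex : forall m al be G B r, famOK m al be G B -> al < r < be -> exists a, LW m al G B r a.
Proof.
  intros m al be G B r HF Hr.
  destruct (free_nbhd B r) as [d [Hd Hfr]].
  set (e := Rmin d (r - al)).
  assert (He : 0 < e) by (apply Rmin_pos; lra).
  assert (He1 : e <= d) by apply Rmin_l. assert (He2 : e <= r - al) by apply Rmin_r.
  destruct (nonbad_in B (r - e) r) as [p0 [Hp0 Hn0]]. lra.
  destruct (W_ex m al be G B p0 HF) as [a Ha].
  exists a, e. split; auto. intros p Hp Hal Hnb.
  destruct (W_ex m al be G B p HF) as [a' Ha'].
  replace a with a'; auto.
  apply (const_int m al be G B (r - e) r p p0 a' a); auto; try lra.
  intros s Hs. apply Hfr. rewrite Rabs_left; lra.
Qed.

Lemma RW_ex : forall m al be G B r, famOK m al be G B -> al < r < be -> exists b, RW m be G B r b.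
Proof.
  intros m al be G B r HF Hr.
  destruct (free_nbhd B r) as [d [Hd Hfr]].
  set (e := Rmin d (be - r)).
  assert (He : 0 < e) by (apply Rmin_pos; lra).
  assert (He1 : e <= d) by apply Rmin_l. assert (He2 : e <= be - r) by apply Rmin_r.
  destruct (nonbad_in B r (r + e)) as [p0 [Hp0 Hn0]]. lra.
  destruct (W_ex m al be G B p0 HF) as [a Ha].
  exists a, e. split; auto. intros p Hp Hal Hnb.
  destruct (W_ex m al be G B p HF) as [a' Ha'].
  replace a with a'; auto.
  apply (const_int m al be G B r (r + e) p p0 a' a); auto; try lra.
  intros s Hs. apply Hfr. rewrite Rabs_right; lra.
Qed.

Lemma LW_pt : forall m al G B r a, LW m al G B r a -> al < r ->
  forall lo, lo < r -> exists p, Rmax lo al < p < r /\ ~ In p B /\ W m G p a.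
Proof.
  intros m al G B r a [d [Hd H]] Hr lo Hlo.
  destruct (nonbad_in B (Rmax (Rmax lo al) (r - d)) r) as [p [Hp Hn]].
  { apply Rmax_lub_lt. apply Rmax_lub_lt; lra. lra. }
  assert (Rmax lo al <= Rmax (Rmax lo al) (r - d)) by apply Rmax_l.
  assert (r - d <= Rmax (Rmax lo al) (r - d)) by apply Rmax_r.
  assert (al <= Rmax lo al) by apply Rmax_r.
  exists p. split. lra. split; auto. apply H; auto; lra.
Qed.

Lemma RW_pt : forall m be G B r b, RW m be G B r b -> r < be ->
  forall hi, r < hi -> exists p, r < p < Rmin hi be /\ ~ In p B /\ W m G p b.
Proof.
  intros m be G B r b [d [Hd H]] Hr hi Hhi.
  destruct (nonbad_in B r (Rmin (Rmin hi be) (r + d))) as [p [Hp Hn]].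
  { apply Rmin_glb_lt. apply Rmin_glb_lt; lra. lra. }
  assert (Rmin (Rmin hi be) (r + d) <= Rmin hi be) by apply Rmin_l.
  assert (Rmin (Rmin hi be) (r + d) <= r + d) by apply Rmin_r.
  assert (Rmin hi be <= be) by apply Rmin_r.
  exists p. split. lra. split; auto. apply H; auto; lra.
Qed.

Lemma LW_uniq : forall m al G B r a a', al < r -> LW m al G B r a -> LW m al G B r a' -> a = a'.
Proof.
  intros m al G B r a a' Hr H1 [d [Hd H2]].
  destruct (LW_pt m al G B r a H1 Hr (r - d)) as [p [Hp [Hn Hw]]]. lra.
  assert (r - d <= Rmax (r - d) al) by apply Rmax_l.
  assert (al <= Rmax (r - d) al) by apply Rmax_r.
  eapply W_uniq; eauto. apply H2; auto; lra.
Qed.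

Lemma RW_uniq : forall m be G B r b b', r < be -> RW m be G B r b -> RW m be G B r b' -> b = b'.
Proof.
  intros m be G B r b b' Hr H1 [d [Hd H2]].
  destruct (RW_pt m be G B r b H1 Hr (r + d)) as [p [Hp [Hn Hw]]]. lra.
  assert (Rmin (r + d) be <= r + d) by apply Rmin_l.
  assert (Rmin (r + d) be <= be) by apply Rmin_r.
  eapply W_uniq; eauto. apply H2; auto; lra.
Qed.

Lemma W_lt : forall m G p x, W m G p x -> (x < m)%nat.
Proof. intros m G p x [H _]; auto. Qed.

Lemma LW_lt : forall m al G B r a, al < r -> LW m al G B r a -> (a < m)%nat.
Proof.
  intros. destruct (LW_pt m al G B r a H0 H (r - 1)) as [p [_ [_ Hw]]]. lra. eapply W_lt; eauto.
Qed.

Lemma RW_lt : forall m be G B r b, r < be -> RW m be G B r b -> (b < m)%nat.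
Proof.
  intros. destruct (RW_pt m be G B r b H0 H (r + 1)) as [p [_ [_ Hw]]]. lra. eapply W_lt; eauto.
Qed.

Definition Chg m al be G B r := al < r < be /\
  exists a b, LW m al G B r a /\ RW m be G B r b /\ a <> b.

Lemma Chg_inB : forall m al be G B r, famOK m al be G B -> Chg m al be G B r -> In r B.
Proof.
  intros m al be G B r HF [Hr [a [b [Ha [Hb Hab]]]]].
  apply NNPP. intro Hnr.
  destruct (free_nbhd B r) as [d [Hd Hfr]].
  destruct (LW_pt m al G B r a Ha ltac:(lra) (r - d)) as [p [Hp [Hnp Hwp]]]. lra.
  destruct (RW_pt m be G B r b Hb ltac:(lra) (r + d)) as [q [Hq [Hnq Hwq]]]. lra.
  assert (r - d <= Rmax (r - d) al) by apply Rmax_l.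
  assert (al <= Rmax (r - d) al) by apply Rmax_r.
  assert (Rmin (r + d) be <= r + d) by apply Rmin_l.
  assert (Rmin (r + d) be <= be) by apply Rmin_r.
  apply Hab. eapply (const_free m al be G B p q); eauto; try lra.
  intros s Hs. destruct (Req_dec s r). subst; auto. apply Hfr.
  split. apply Rabs_pos_lt. lra. apply Rabs_def1; lra.
Qed.

Definition inb (p q b : R) : bool :=
  if Rlt_dec p b then if Rlt_dec b q then true else false else false.
Definition cnt p q (B : list R) := length (filter (inb p q) B).

Lemma cnt_zero : forall p q B, cnt p q B = 0%nat -> forall r, p < r < q -> ~ In r B.
Proof.
  intros p q B H r Hr Hin. unfold cnt in H. apply length_zero_iff_nil in H.
  assert (In r (filter (inb p q) B)). apply filter_In. split; auto.
  unfold inb. destruct (Rlt_dec p r); [|lra]. destruct (Rlt_dec r q); auto; lra.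
  rewrite H in H0; auto.
Qed.

Lemma inb_mono : forall p q p' q' a, p <= p' -> q' <= q -> inb p' q' a = true -> inb p q a = true.
Proof.
  unfold inb; intros. destruct (Rlt_dec p' a); [|discriminate]. destruct (Rlt_dec a q'); [|discriminate].
  destruct (Rlt_dec p a); [|lra]. destruct (Rlt_dec a q); auto; lra.
Qed.

Lemma cnt_mono : forall p q p' q' B, p <= p' -> q' <= q -> (cnt p' q' B <= cnt p q B)%nat.
Proof.
  intros. unfold cnt. induction B; simpl. lia.
  destruct (inb p' q' a) eqn:E1. rewrite (inb_mono p q p' q' a H H0 E1). simpl; lia.
  destruct (inb p q a); simpl; lia.
Qed.

Lemma cnt_lt : forall p q p' q' B r, p <= p' -> q' <= q -> In r B -> p < r < q ->
  ~ (p' < r < q') -> (cnt p' q' B < cnt p q B)%nat.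
Proof.
  intros p q p' q' B r H1 H2 Hin Hr Hn. unfold cnt. induction B; simpl. destruct Hin.
  destruct Hin as [Heq|Hin].
  - subst. assert (inb p q r = true).
    { unfold inb. destruct (Rlt_dec p r); [|lra]. destruct (Rlt_dec r q); auto; lra. }
    assert (inb p' q' r = false).
    { unfold inb. destruct (Rlt_dec p' r); auto. destruct (Rlt_dec r q'); auto. exfalso; apply Hn; lra. }
    rewrite H, H0. simpl.
    pose proof (cnt_mono p q p' q' B H1 H2). unfold cnt in H3. lia.
  - specialize (IHB Hin).
    destruct (inb p' q' a) eqn:E1. rewrite (inb_mono p q p' q' a H1 H2 E1). simpl; lia.
    destruct (inb p q a); simpl; lia.
Qed.

Lemma const_nochg : forall m al be G B, famOK m al be G B -> forall k p q x y,
  (cnt p q B <= k)%nat -> al < p -> p < q -> q < be -> ~ In p B -> ~ In q B ->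
  W m G p x -> W m G q y -> (forall r, p < r < q -> In r B -> ~ Chg m al be G B r) -> x = y.
Proof.
  intros m al be G B HF. induction k; intros p q x y Hc H1 H2 H3 Hp Hq Wx Wy Hno.
  - apply (const_free m al be G B p q x y); auto. apply cnt_zero. lia.
  - destruct (classic (exists r, p < r < q /\ In r B)) as [[r [Hr Hin]]|Hne].
    2: { apply (const_free m al be G B p q x y); auto. intros r Hr Hin. apply Hne; eauto. }
    destruct (LW_ex m al be G B r HF) as [a Ha]. lra.
    destruct (RW_ex m al be G B r HF) as [b Hb]. lra.
    assert (a = b).
    { apply NNPP; intro Hab. apply (Hno r Hr Hin). split. lra. exists a, b; auto. }
    subst b.
    destruct (LW_pt m al G B r a Ha ltac:(lra) p) as [p' [Hp' [Hnp Hwp]]]. lra.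
    destruct (RW_pt m be G B r a Hb ltac:(lra) q) as [q' [Hq' [Hnq Hwq]]]. lra.
    assert (p <= Rmax p al) by apply Rmax_l. assert (al <= Rmax p al) by apply Rmax_r.
    assert (Rmin q be <= q) by apply Rmin_l. assert (Rmin q be <= be) by apply Rmin_r.
    transitivity a.
    + apply (IHk p p' x a); auto; try lra.
      assert (cnt p p' B < cnt p q B)%nat. { eapply (cnt_lt p q p p' B r); eauto; lra. } lia.
      intros s Hs Hs'. apply Hno; auto. lra.
    + apply (IHk q' q a y); auto; try lra.
      assert (cnt q' q B < cnt p q B)%nat. { eapply (cnt_lt p q q' q B r); eauto; lra. } lia.
      intros s Hs Hs'. apply Hno; auto. lra.
Qed.

Lemma E_at : forall m al be G B z x, famOK m al be G B -> (x < m)%nat ->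
  (exists d, 0 < d /\ forall q, z < q < z + d -> ~ In q B -> W m G q x) -> Ef m G z = G x z.
Proof.
  intros m al be G B z x HF Hx [d [Hd Hw]].
  assert (Hle : forall y, (y < m)%nat -> G y z <= G x z).
  { intros y Hy. apply Rnot_lt_le. intro Hlt.
    destruct HF as [_ [_ [Hc _]]].
    assert (Hcf : continuity (fun t => G y t - G x t)) by (apply cont_sub; auto).
    destruct (Hcf z ((G y z - G x z) / 2)) as [alp [Halp Hlim]]. lra.
    destruct (nonbad_in B z (z + Rmin d alp)) as [q [Hq Hnq]].
    assert (0 < Rmin d alp) by (apply Rmin_pos; lra). lra.
    assert (Rmin d alp <= d) by apply Rmin_l. assert (Rmin d alp <= alp) by apply Rmin_r.
    assert (Wq := Hw q ltac:(lra) Hnq).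
    assert (G y q <= G x q).
    { destruct Wq as [_ [He _]]. rewrite He. apply (maxR_ge m (fun u => G u q)). auto. }
    assert (Hd' : R_dist q z < alp). { unfold R_dist. rewrite Rabs_right; lra. }
    assert (Hzq : z <> q) by (apply Rlt_not_eq; lra). specialize (Hlim q (conj (conj I Hzq) Hd')). simpl in Hlim. unfold R_dist in Hlim.
    apply Rabs_def2 in Hlim. lra. }
  destruct HF as [Hm [Hnn _]].
  destruct (maxR_att m (fun u => G u z) Hm) as [y [Hy He]]. intros; apply Hnn.
  unfold Ef. rewrite He. apply Rle_antisym. apply Hle; auto.
  rewrite <- He. apply (maxR_ge m (fun u => G u z)). auto.
Qed.

Lemma inj_len : forall (l : list R) (Rel : R -> nat -> Prop) m, NoDup l ->
  (forall r, In r l -> exists k, (k < m)%nat /\ Rel r k) ->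
  (forall r r' k, In r l -> In r' l -> Rel r k -> Rel r' k -> r = r') ->
  (length l <= m)%nat.
Proof.
  intros l Rel m Hnd Hex Hinj.
  assert (exists ks, length ks = length l /\ NoDup ks /\ (forall k, In k ks -> (k < m)%nat) /\
           (forall k, In k ks -> exists r, In r l /\ Rel r k)) as [ks [H1 [H2 [H3 _]]]].
  { clear - Hnd Hex Hinj. induction l as [|r l IH].
    - exists nil. simpl. repeat split; auto. constructor. intros k []. intros k [].
    - inversion Hnd; subst.
      destruct IH as [ks [K1 [K2 [K3 K4]]]]; auto.
      intros; apply Hex; simpl; auto. intros; eapply Hinj; simpl; eauto.
      destruct (Hex r) as [k [Hk Hrk]]. simpl; auto.
      exists (k :: ks). simpl. split. lia. split. constructor; auto.
      intro Hin. destruct (K4 k Hin) as [r' [Hr' Hr'k]].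
      assert (r = r'). eapply Hinj; simpl; eauto. subst; auto.
      split. intros k' [<-|h]; auto.
      intros k' [<-|h]. exists r; auto. destruct (K4 k' h) as [r' [? ?]]. exists r'; auto. }
  rewrite <- H1. replace m with (length (seq 0 m)) by apply length_seq.
  apply NoDup_incl_length; auto. intros k Hk. apply in_seq. specialize (H3 k Hk). lia.
Qed.

Lemma partition_ex : forall (P : R -> Prop) (l : list R), NoDup l -> exists l1 l2,
  NoDup l1 /\ NoDup l2 /\ (forall x, In x l1 -> In x l /\ P x) /\
  (forall x, In x l2 -> In x l /\ ~ P x) /\ length l = (length l1 + length l2)%nat.
Proof.
  intros P l. induction l as [|a l IH]; intros Hnd.
  - exists nil, nil. simpl. repeat split; try apply NoDup_nil; tauto.
  - apply NoDup_cons_iff in Hnd as [H1 H2]. destruct (IH H2) as [l1 [l2 [A1 [A2 [A3 [A4 A5]]]]]].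
    destruct (classic (P a)).
    + exists (a :: l1), l2. split; [|split; [|split; [|split]]]; auto.
      * constructor; auto. intro h; apply H1; apply A3; auto.
      * intros y [<-|h]. simpl; auto. apply A3 in h; simpl; tauto.
      * intros y h. apply A4 in h; simpl; tauto.
      * simpl; lia.
    + exists l1, (a :: l2). split; [|split; [|split; [|split]]]; auto.
      * constructor; auto. intro h; apply H1; apply A4; auto.
      * intros y h. apply A3 in h; simpl; tauto.
      * intros y [<-|h]. simpl; auto. apply A4 in h; simpl; tauto.
      * simpl; lia.
Qed.

Definition NRel m al be G B r k := RW m be G B r k /\
  forall p, al < p < r -> ~ In p B -> ~ W m G p k.
Definition ORel m al be G B r k := LW m al G B r k /\ exists b, b <> k /\ RW m be G B r b /\
  exists p0, al < p0 < r /\ ~ In p0 B /\ W m G p0 b.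

Lemma N_inj : forall m al be G B r r' k, r < r' -> r' < be ->
  NRel m al be G B r k -> NRel m al be G B r' k -> al < r -> False.
Proof.
  intros m al be G B r r' k Hr Hr' [H1 _] [_ H2] Hal.
  destruct (RW_pt m be G B r k H1 ltac:(lra) r') as [p [Hp [Hn Hw]]]. lra.
  assert (Rmin r' be <= r') by apply Rmin_l.
  apply (H2 p); auto. lra.
Qed.

Lemma O_inj : forall m al be G B r r' k, famOK m al be G B -> al < r -> r < r' -> r' < be ->
  ORel m al be G B r k -> ORel m al be G B r' k -> False.
Proof.
  intros m al be G B r r' k HF Hal Hr Hr' [Hl1 [b [Hbk [Hrb [p0 [Hp0 [Hn0 Hw0]]]]]]] [Hl2 _].
  destruct (LW_pt m al G B r k Hl1 Hal p0) as [p1 [Hp1 [Hn1 Hw1]]]. lra.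
  destruct (RW_pt m be G B r b Hrb ltac:(lra) r') as [p2 [Hp2 [Hn2 Hw2]]]. lra.
  destruct (LW_pt m al G B r' k Hl2 ltac:(lra) p2) as [p3 [Hp3 [Hn3 Hw3]]].
  { assert (Rmin r' be <= r') by apply Rmin_l. lra. }
  assert (p0 <= Rmax p0 al) by apply Rmax_l. assert (p2 <= Rmax p2 al) by apply Rmax_l.
  assert (Rmin r' be <= r') by apply Rmin_l.
  assert (S0 : G k p0 < G b p0) by (eapply (W_strict m al be G B p0 p1 b k); eauto; lra).
  assert (S1 : G b p1 < G k p1) by (eapply (W_strict m al be G B p1 p0 k b); eauto; lra).
  assert (S2 : G k p2 < G b p2) by (eapply (W_strict m al be G B p2 p1 b k); eauto; lra).
  assert (S3 : G b p3 < G k p3) by (eapply (W_strict m al be G B p3 p2 k b); eauto; lra).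
  destruct HF as [_ [_ [Hc [H3 _]]]].
  assert (Hcf : continuity (fun t => G b t - G k t)) by (apply cont_sub; auto).
  destruct (ivt0 _ p0 p1 Hcf) as [z1 [Hz1 E1]]. lra. nra.
  destruct (ivt0 _ p1 p2 Hcf) as [z2 [Hz2 E2]]. lra. nra.
  destruct (ivt0 _ p2 p3 Hcf) as [z3 [Hz3 E3]]. lra. nra.
  assert (Hid := H3 b k (W_lt _ _ _ _ Hw0) (W_lt _ _ _ _ Hw1) z1 z2 z3).
  assert (G b p0 = G k p0). apply Hid; try lra. lra.
Qed.

Lemma DS_bound : forall m al be G B Rl, famOK m al be G B -> NoDup Rl ->
  (forall r, In r Rl -> Chg m al be G B r) -> (length Rl <= 2 * m)%nat.
Proof.
  intros m al be G B Rl HF Hnd Hch.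
  destruct (partition_ex (fun r => exists k, NRel m al be G B r k) Rl Hnd)
    as [l1 [l2 [N1 [N2 [P1 [P2 Hlen]]]]]].
  assert (length l1 <= m)%nat.
  { apply (inj_len l1 (NRel m al be G B) m N1).
    - intros r Hr. destruct (P1 r Hr) as [Hin [k Hk]]. exists k. split; auto.
      destruct (Hch r Hin) as [Hr' _]. destruct Hk as [Hk _]. eapply RW_lt; eauto. lra.
    - intros r r' k Hr Hr' H1 H2. destruct (P1 r Hr) as [Hin _]. destruct (P1 r' Hr') as [Hin' _].
      destruct (Hch r Hin) as [Ha _]. destruct (Hch r' Hin') as [Ha' _].
      destruct (Rtotal_order r r') as [h|[h|h]]; auto; exfalso.
      eapply (N_inj m al be G B r r'); eauto; lra.
      eapply (N_inj m al be G B r' r); eauto; lra. }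
  assert (length l2 <= m)%nat.
  { apply (inj_len l2 (ORel m al be G B) m N2).
    - intros r Hr. destruct (P2 r Hr) as [Hin HnN].
      destruct (Hch r Hin) as [Hr' [a [b [Ha [Hb Hab]]]]].
      exists a. split. eapply LW_lt; eauto. lra.
      split; auto. exists b. split; auto. split; auto.
      apply NNPP; intro Hno. apply HnN. exists b. split; auto.
      intros p Hp Hnp Hwp. apply Hno. exists p; auto.
    - intros r r' k Hr Hr' H1 H2. destruct (P2 r Hr) as [Hin _]. destruct (P2 r' Hr') as [Hin' _].
      destruct (Hch r Hin) as [Ha _]. destruct (Hch r' Hin') as [Ha' _].
      destruct (Rtotal_order r r') as [h|[h|h]]; auto; exfalso.
      eapply (O_inj m al be G B r r'); eauto; lra.
      eapply (O_inj m al be G B r' r); eauto; lra. }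
  lia.
Qed.

Lemma filt_ex : forall (P : R -> Prop) (B : list R), exists l, NoDup l /\
  forall x, In x l <-> In x B /\ P x.
Proof.
  intros P B. induction B as [|a B IH].
  - exists nil. split. constructor. simpl; tauto.
  - destruct IH as [l [Hnd Hl]].
    destruct (classic (P a /\ ~ In a l)) as [[Ha Hn]|Hn].
    + exists (a :: l). split. constructor; auto.
      intros x; simpl; rewrite Hl. split.
      intros [<-|h]; tauto. intros [[<-|h] hp]; auto.
    + exists l. split; auto. intros x. rewrite Hl. simpl. split. tauto.
      intros [[<-|h] hp]; auto. split; auto. apply NNPP; intro h'. apply Hn; split; auto.
      intro h''. apply h'. apply Hl in h''. tauto.
Qed.

Lemma min_above : forall (T : list R) z, (exists t, In t T /\ z < t) ->
  exists c, In c T /\ z < c /\ forall t, In t T -> z < t -> c <= t.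
Proof.
  induction T as [|a T IH]; intros z [t [Ht Hzt]]. { destruct Ht. }
  destruct (classic (exists t, In t T /\ z < t)) as [Hex|Hno].
  - destruct (IH z Hex) as [c [Hc [Hzc Hmin]]].
    destruct (Rlt_dec z a).
    + exists (Rmin a c). split.
      unfold Rmin; destruct (Rle_dec a c); simpl; auto.
      split. apply Rmin_glb_lt; auto.
      intros u [<-|h] Hu. apply Rmin_l. eapply Rle_trans. apply Rmin_r. auto.
    + exists c. split. simpl; auto. split; auto. intros u [<-|h] Hu. lra. auto.
  - destruct Ht as [->|h]. 2: exfalso; apply Hno; eauto.
    exists t. split. simpl; auto. split; auto. intros u [<-|h] Hu. lra.
    exfalso; apply Hno; eauto.
Qed.

Lemma len_le2 : forall (l : list R), NoDup l ->
  (forall a b c, In a l -> In b l -> In c l -> a <> b -> b <> c -> a <> c -> False) ->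
  (length l <= 2)%nat.
Proof.
  intros l Hnd H. destruct l as [|a [|b [|c l]]]; simpl; try lia.
  exfalso. apply NoDup_cons_iff in Hnd as [H1 H2]. apply NoDup_cons_iff in H2 as [H3 H4].
  apply (H a b c); simpl; auto.
  intro e; subst; apply H1; simpl; auto.
  intro e; subst; apply H3; simpl; auto.
  intro e; subst; apply H1; simpl; auto.
Qed.

Lemma fiber_len : forall (T Z : list R) (Rel : R -> R -> Prop), NoDup Z ->
  (forall z, In z Z -> exists c, In c T /\ Rel z c) ->
  (forall a b c t, In a Z -> In b Z -> In c Z -> a <> b -> b <> c -> a <> c ->
     Rel a t -> Rel b t -> Rel c t -> False) ->
  (length Z <= 2 * length T)%nat.
Proof.
  induction T as [|t T IH]; intros Z Rel Hnd Hex Htri.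
  - destruct Z as [|z Z]. simpl; lia. destruct (Hex z) as [c [[] _]]. simpl; auto.
  - destruct (partition_ex (fun z => Rel z t) Z Hnd) as [l1 [l2 [N1 [N2 [P1 [P2 Hlen]]]]]].
    assert (length l1 <= 2)%nat.
    { apply len_le2; auto. intros a b c Ha Hb Hc ? ? ?.
      apply P1 in Ha; apply P1 in Hb; apply P1 in Hc.
      apply (Htri a b c t); tauto. }
    assert (length l2 <= 2 * length T)%nat.
    { apply (IH l2 Rel N2).
      - intros z Hz. destruct (P2 z Hz) as [Hin Hn]. destruct (Hex z Hin) as [c [[<-|h] Hr]].
        contradiction. eauto.
      - intros a b c u Ha Hb Hc. apply P2 in Ha; apply P2 in Hb; apply P2 in Hc.
        apply Htri; tauto. }
    simpl. lia.
Qed.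

Definition isozero m al be G1 G2 z := al < z < be /\ Ef m G1 z = Ef m G2 z /\
  exists eps, 0 < eps /\ forall s, al < s < be -> Rabs (s - z) < eps -> s <> z ->
    Ef m G1 s <> Ef m G2 s.

Lemma W_region : forall m al be G B z1 c p x, famOK m al be G B ->
  al < z1 -> c <= be -> z1 < p < c -> ~ In p B -> W m G p x ->
  (forall r, z1 < r < c -> ~ Chg m al be G B r) ->
  forall q, z1 < q < c -> ~ In q B -> W m G q x.
Proof.
  intros m al be G B z1 c p x HF H1 H2 Hp Hnp Wp Hno q Hq Hnq.
  destruct (W_ex m al be G B q HF) as [y Wy].
  replace x with y; auto.
  destruct (Rtotal_order p q) as [h|[h|h]].
  - symmetry. apply (const_nochg m al be G B HF (cnt p q B) p q x y); auto; try lra.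
    intros r Hr _. apply Hno. lra.
  - subst. eapply W_uniq; eauto.
  - apply (const_nochg m al be G B HF (cnt q p B) q p y x); auto; try lra.
    intros r Hr _. apply Hno. lra.
Qed.

Lemma tri_contra : forall m al be G1 G2 B z1 z2 z3 c,
  famOK m al be G1 B -> famOK m al be G2 B ->
  (forall x y, (x < m)%nat -> (y < m)%nat -> P3 (G1 x) (G2 y)) ->
  z1 < z2 -> z2 < z3 -> z3 < c -> c <= be ->
  isozero m al be G1 G2 z1 -> isozero m al be G1 G2 z2 -> isozero m al be G1 G2 z3 ->
  (forall r, z1 < r < c -> ~ Chg m al be G1 B r) ->
  (forall r, z1 < r < c -> ~ Chg m al be G2 B r) -> False.
Proof.
  intros m al be G1 G2 B z1 z2 z3 c HF1 HF2 HP z12 z23 z3c Hc I1 I2 I3 Hn1 Hn2.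
  destruct (nonbad_in B z1 z2 z12) as [p [Hp Hnp]].
  destruct (W_ex m al be G1 B p HF1) as [x Wx].
  destruct (W_ex m al be G2 B p HF2) as [y Wy].
  assert (Hal : al < z1) by (destruct I1; lra).
  assert (R1 := W_region m al be G1 B z1 c p x HF1 Hal Hc ltac:(lra) Hnp Wx Hn1).
  assert (R2 := W_region m al be G2 B z1 c p y HF2 Hal Hc ltac:(lra) Hnp Wy Hn2).
  assert (Hx := W_lt _ _ _ _ Wx). assert (Hy := W_lt _ _ _ _ Wy).
  assert (Ez : forall z, z1 <= z < c -> isozero m al be G1 G2 z -> G1 x z = G2 y z).
  { intros z Hz [_ [Hzz _]].
    rewrite <- (E_at m al be G1 B z x HF1 Hx), <- (E_at m al be G2 B z y HF2 Hy); auto.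
    - exists (c - z). split. lra. intros q Hq Hnq. apply R2; auto; lra.
    - exists (c - z). split. lra. intros q Hq Hnq. apply R1; auto; lra. }
  assert (Hid := HP x y Hx Hy z1 z2 z3 ltac:(lra) ltac:(lra) ltac:(lra)
    (Ez z1 ltac:(lra) I1) (Ez z2 ltac:(lra) I2) (Ez z3 ltac:(lra) I3)).
  destruct I1 as [Hz1 [_ [eps [Heps Hiso]]]].
  destruct (nonbad_in B z1 (Rmin (z1 + eps) z2)) as [q [Hq Hnq]].
  { apply Rmin_glb_lt; lra. }
  assert (Rmin (z1 + eps) z2 <= z1 + eps) by apply Rmin_l.
  assert (Rmin (z1 + eps) z2 <= z2) by apply Rmin_r.
  apply (Hiso q). lra. rewrite Rabs_right; lra. apply Rgt_not_eq; lra.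
  destruct (R1 q ltac:(lra) Hnq) as [_ [E1 _]]. destruct (R2 q ltac:(lra) Hnq) as [_ [E2 _]].
  rewrite <- E1, <- E2. apply Hid.
Qed.

Lemma zeros_bound : forall m al be G1 G2 B Z, al < be ->
  famOK m al be G1 B -> famOK m al be G2 B ->
  (forall x y, (x < m)%nat -> (y < m)%nat -> P3 (G1 x) (G2 y)) ->
  NoDup Z -> (forall z, In z Z -> isozero m al be G1 G2 z) ->
  (length Z <= 2 * (4 * m + 1))%nat.
Proof.
  intros m al be G1 G2 B Z Hab HF1 HF2 HP Hnd HZ.
  destruct (filt_ex (Chg m al be G1 B) B) as [Q1 [N1 HQ1]].
  destruct (filt_ex (Chg m al be G2 B) B) as [Q2 [N2 HQ2]].
  assert (L1 : (length Q1 <= 2 * m)%nat).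
  { apply (DS_bound m al be G1 B Q1 HF1 N1). intros r Hr; apply HQ1 in Hr; tauto. }
  assert (L2 : (length Q2 <= 2 * m)%nat).
  { apply (DS_bound m al be G2 B Q2 HF2 N2). intros r Hr; apply HQ2 in Hr; tauto. }
  set (T := Q1 ++ Q2 ++ be :: nil).
  assert (LT : length T = (length Q1 + length Q2 + 1)%nat).
  { unfold T. rewrite !length_app. simpl. lia. }
  assert (HTbe : forall t, In t T -> t <= be).
  { intros t Ht. unfold T in Ht. apply in_app_or in Ht as [h|h].
    apply HQ1 in h as [_ [[_ ?] _]]. lra.
    apply in_app_or in h as [h|[h|[]]]. apply HQ2 in h as [_ [[_ ?] _]]. lra. lra. }
  set (Rel := fun z c => z < c /\ forall t, In t T -> z < t -> c <= t).
  assert (length Z <= 2 * length T)%nat.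
  { apply (fiber_len T Z Rel Hnd).
    - intros z Hz. destruct (min_above T z) as [c [Hc [Hzc Hmin]]].
      exists be. split. unfold T. apply in_or_app; right; apply in_or_app; right; simpl; auto.
      destruct (HZ z Hz) as [? _]. lra.
      exists c. split; auto. split; auto.
    - assert (Htri : forall a b c t, In a Z -> In b Z -> In c Z -> a < b -> b < c ->
               Rel a t -> Rel b t -> Rel c t -> False).
      { intros a b c t Ha Hb Hc Hab' Hbc [Hat Hmin] _ [Hct _].
        assert (Htin : t <= be).
        { destruct (min_above T a) as [c' [Hc' [Hac' Hmin']]].
          exists be. split. unfold T. apply in_or_app; right; apply in_or_app; right; simpl; auto.
          destruct (HZ a Ha) as [? _]. lra.
          assert (t <= c') by (apply Hmin; auto). apply HTbe in Hc'. lra. }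
        apply (tri_contra m al be G1 G2 B a b c t HF1 HF2 HP Hab' Hbc Hct Htin); auto.
        - intros r Hr Hch. assert (In r T).
          { unfold T. apply in_or_app; left. apply HQ1. split. exact (Chg_inB m al be G1 B r HF1 Hch). exact Hch. }
          assert (t <= r) by (apply Hmin; auto; lra). lra.
        - intros r Hr Hch. assert (In r T).
          { unfold T. apply in_or_app; right; apply in_or_app; left. apply HQ2. split.
            exact (Chg_inB m al be G2 B r HF2 Hch). exact Hch. }
          assert (t <= r) by (apply Hmin; auto; lra). lra. }
      intros a b c t Ha Hb Hc Hab' Hbc Hac Ra Rb Rc.
      destruct (Rtotal_order a b) as [h1|[h1|h1]]; [|contradiction|];
      destruct (Rtotal_order b c) as [h2|[h2|h2]]; try contradiction;
      destruct (Rtotal_order a c) as [h3|[h3|h3]]; try contradiction; try lra.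
      + eapply (Htri a b c t); eauto.
      + eapply (Htri a c b t); eauto.
      + eapply (Htri c a b t); eauto.
      + eapply (Htri b a c t); eauto.
      + eapply (Htri b c a t); eauto.
      + eapply (Htri c b a t); eauto. }
  lia.
Qed.

Lemma roots2 : forall f g, P3 f g -> (exists s, f s <> g s) ->
  exists l, forall t, f t = g t -> In t l.
Proof.
  intros f g HP [s Hs].
  destruct (classic (exists r1, f r1 = g r1)) as [[r1 H1]|Hno].
  2: { exists nil. intros t Ht. exfalso; apply Hno; eauto. }
  destruct (classic (exists r2, r2 <> r1 /\ f r2 = g r2)) as [[r2 [H2 H2']]|Hno].
  2: { exists (r1 :: nil). intros t Ht. destruct (Req_dec t r1). subst; simpl; auto.
       exfalso; apply Hno; eauto. }
  exists (r1 :: r2 :: nil). intros t Ht.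
  destruct (Req_dec t r1). subst; simpl; auto. destruct (Req_dec t r2). subst; simpl; auto.
  exfalso. apply Hs. apply (HP r1 r2 t); auto.
Qed.

Lemma fin_union : forall N (P : nat -> R -> Prop),
  (forall x, (x < N)%nat -> exists l, forall t, P x t -> In t l) ->
  exists B, forall x t, (x < N)%nat -> P x t -> In t B.
Proof.
  induction N; intros P H.
  - exists nil. intros; lia.
  - destruct (IHN P) as [B1 HB1]. intros; apply H; lia.
    destruct (H N) as [l Hl]. lia.
    exists (B1 ++ l). intros x t Hx Hp. apply in_or_app.
    destruct (Nat.eq_dec x N). subst; right; auto. left; apply (HB1 x); auto; lia.
Qed.

Lemma bad_ex : forall n (G : nat -> R -> R),
  (forall x y, (x < n)%nat -> (y < n)%nat -> P3 (G x) (G y)) ->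
  exists B, forall x y t, (x < n)%nat -> (y < n)%nat -> G x t = G y t ->
    (exists s, G x s <> G y s) -> In t B.
Proof.
  intros n G HP.
  destruct (fin_union n (fun x t => exists y, (y < n)%nat /\ G x t = G y t /\ exists s, G x s <> G y s))
    as [B HB].
  - intros x Hx.
    destruct (fin_union n (fun y t => G x t = G y t /\ exists s, G x s <> G y s)) as [l Hl].
    + intros y Hy. destruct (classic (exists s, G x s <> G y s)) as [He|He].
      * destruct (roots2 (G x) (G y) (HP x y Hx Hy) He) as [l Hl]. exists l. intros t [Ht _]; auto.
      * exists nil. intros t [_ Ht]. contradiction.
    + exists l. intros t [y [Hy Ht]]. apply (Hl y t Hy Ht).
  - exists B. intros x y t Hx Hy Ht Hs. apply (HB x t Hx). exists y; auto.
Qed.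

Fixpoint sumN (K : nat) (f : nat -> nat) : nat :=
  match K with O => O | S K' => (sumN K' f + f K')%nat end.

Lemma sumN_plus : forall K f g, sumN K (fun j => f j + g j)%nat = (sumN K f + sumN K g)%nat.
Proof. induction K; simpl; intros; auto. rewrite IHK. lia. Qed.

Lemma sumN_le : forall K f g, (forall j, (j < K)%nat -> (f j <= g j)%nat) -> (sumN K f <= sumN K g)%nat.
Proof. induction K; simpl; intros; auto. specialize (IHK f g). assert (f K <= g K)%nat by (apply H; lia).
  assert (sumN K f <= sumN K g)%nat by (apply IHK; intros; apply H; lia). lia. Qed.

Lemma sumN_const : forall K c, sumN K (fun _ => c) = (K * c)%nat.
Proof. induction K; simpl; intros; auto. rewrite IHK. lia. Qed.

Lemma sumN_ge : forall K f j, (j < K)%nat -> (f j <= sumN K f)%nat.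
Proof. induction K; simpl; intros. lia. destruct (Nat.eq_dec j K). subst; lia.
  specialize (IHK f j ltac:(lia)). lia. Qed.

Lemma sumN_ext : forall K f g, (forall j, (j < K)%nat -> f j = g j) -> sumN K f = sumN K g.
Proof. induction K; simpl; intros; auto. rewrite (IHK f g), H; auto. Qed.

Lemma filter_cons_len : forall (A : Type) (p : A -> bool) a l,
  length (filter p (a :: l)) = ((if p a then 1%nat else 0%nat) + length (filter p l))%nat.
Proof. intros; simpl; destruct (p a); simpl; auto. Qed.

Lemma cover : forall (A : Type) (l : list A) K1 K2 (P Q : nat -> A -> bool),
  (forall a, In a l -> (exists j, (j < K1)%nat /\ P j a = true) \/ (exists j, (j < K2)%nat /\ Q j a = true)) ->
  (length l <= sumN K1 (fun j => length (filter (P j) l)) + sumN K2 (fun j => length (filter (Q j) l)))%nat.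
Proof.
  induction l as [|a l IH]; intros K1 K2 P Q H. simpl; lia.
  rewrite (sumN_ext K1 _ (fun j => (if P j a then 1%nat else 0%nat) + length (filter (P j) l))%nat)
    by (intros; apply filter_cons_len).
  rewrite (sumN_ext K2 _ (fun j => (if Q j a then 1%nat else 0%nat) + length (filter (Q j) l))%nat)
    by (intros; apply filter_cons_len).
  rewrite !sumN_plus.
  assert (IH' := IH K1 K2 P Q ltac:(intros; apply H; simpl; auto)).
  assert (1 <= sumN K1 (fun j => if P j a then 1%nat else 0%nat) + sumN K2 (fun j => if Q j a then 1%nat else 0%nat))%nat.
  { destruct (H a ltac:(simpl; auto)) as [[j [Hj Hp]]|[j [Hj Hp]]].
    - assert (Hg := sumN_ge K1 (fun j => if P j a then 1%nat else 0%nat) j Hj). simpl in Hg. rewrite Hp in Hg. lia.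
    - assert (Hg := sumN_ge K2 (fun j => if Q j a then 1%nat else 0%nat) j Hj). simpl in Hg. rewrite Hp in Hg. lia. }
  simpl length. lia.
Qed.

Definition lin (times : nat -> R) (pos : nat -> R -> point) i s k t :=
  ((times (S i) - t) * pos s (times i) k + (t - times i) * pos s (times (S i)) k)
      / (times (S i) - times i).
Definition Gf d times pos i s x t :=
  sumR d (fun k => (lin times pos i s k t - lin times pos i x k t) ^ 2).

Lemma Gf_quad : forall d times pos i s x, times i < times (S i) -> isquad (Gf d times pos i s x).
Proof.
  intros. unfold Gf. apply isquad_sumR. intros k.
  set (h := times (S i) - times i).
  set (P0 := pos s (times i) k - pos x (times i) k).
  set (P1 := pos s (times (S i)) k - pos x (times (S i)) k).
  destruct (isquad_sqlin ((times (S i) * P0 - times i * P1) / h) ((P1 - P0) / h)) as [A [B [C HH]]].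
  exists A, B, C. intros t. rewrite <- HH. f_equal. unfold lin, P0, P1, h. field. lra.
Qed.

Lemma Gf_nonneg : forall d times pos i s x t, 0 <= Gf d times pos i s x t.
Proof. intros. unfold Gf. apply sumR_ge0. intros; apply pow2_ge_0. Qed.

Lemma famOK_pair : forall d n times pos i sg ps, (1 <= n)%nat -> times i < times (S i) ->
  exists B, famOK n (times i) (times (S i)) (Gf d times pos i sg) B /\
            famOK n (times i) (times (S i)) (Gf d times pos i ps) B.
Proof.
  intros d n times pos i sg ps Hn Hi.
  assert (HP : forall s s' x y, P3 (Gf d times pos i s x) (Gf d times pos i s' y)).
  { intros. apply isquad_P3. apply isquad_sub; apply Gf_quad; auto. }
  destruct (bad_ex n (Gf d times pos i sg)) as [B1 HB1]. intros; apply HP.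
  destruct (bad_ex n (Gf d times pos i ps)) as [B2 HB2]. intros; apply HP.
  exists (B1 ++ B2). split; repeat split; auto;
    first [ intros; apply Gf_nonneg
          | intros; apply isquad_cont, Gf_quad; auto
          | intros x y t h1 h2 h3 h4 h5; apply in_or_app; left; exact (HB1 x y t h1 h2 h4 h5)
          | intros x y t h1 h2 h3 h4 h5; apply in_or_app; right; exact (HB2 x y t h1 h2 h4 h5)
          | intros; apply HP ].
Qed.

Lemma Dfun_eq : forall d n tau times pos i sg s, piecewise_linear d n tau times pos ->
  (i < tau)%nat -> (sg < n)%nat -> times i <= s <= times (S i) ->
  Dfun d n pos sg s = sqrt (Ef n (Gf d times pos i sg) s).
Proof.
  intros d n tau times pos i sg s Hpl Hi Hsg Hs. unfold Dfun, Ef.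
  rewrite <- maxR_sqrt by (intros; apply Gf_nonneg).
  apply maxR_ext. intros x Hx. unfold Defs.dist, Gf. f_equal.
  apply sumR_ext. intros k Hk. unfold lin. rewrite !(Hpl _ i s k); auto.
Qed.

Lemma times_mono : forall tau (times : nat -> R), (forall i, (i < tau)%nat -> times i < times (S i)) ->
  forall i j, (i <= j)%nat -> (j <= tau)%nat -> times i <= times j.
Proof.
  intros tau times H i j Hij. induction Hij; intros. lra.
  specialize (IHHij ltac:(lia)). specialize (H m ltac:(lia)). lra.
Qed.

Lemma per_interval : forall d n tau times pos i sg ps Z,
  piecewise_linear d n tau times pos -> (forall i, (i < tau)%nat -> times i < times (S i)) ->
  (i < tau)%nat -> NoDup Z ->
  (forall z, In z Z -> times i < z < times (S i) /\ is_intersection d n tau times pos sg ps z) ->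
  (length Z <= 2 * (4 * n + 1))%nat.
Proof.
  intros d n tau times pos i sg ps Z Hpl Hinc Hi Hnd HZ.
  destruct Z as [|z0 Z0]. simpl; lia.
  destruct (HZ z0 ltac:(simpl; auto)) as [_ [Hsp [Hpn _]]].
  assert (Hn : (1 <= n)%nat) by lia.
  assert (Hsn : (sg < n)%nat) by lia.
  assert (Hti := Hinc i Hi).
  destruct (famOK_pair d n times pos i sg ps Hn Hti) as [B [HF1 HF2]].
  assert (H0 : times 0%nat <= times i) by (apply (times_mono tau times Hinc); lia).
  assert (Ht : times (S i) <= times tau) by (apply (times_mono tau times Hinc); lia).
  apply (zeros_bound n (times i) (times (S i)) (Gf d times pos i sg) (Gf d times pos i ps) B); auto.
  - intros. apply isquad_P3. apply isquad_sub; apply Gf_quad; auto.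
  - intros z Hz. destruct (HZ z Hz) as [Hzi [_ [_ [_ [Heq [eps [Heps Hiso]]]]]]].
    assert (Eq : forall s, times i <= s <= times (S i) ->
      (Dfun d n pos sg s = Dfun d n pos ps s <-> Ef n (Gf d times pos i sg) s = Ef n (Gf d times pos i ps) s)).
    { intros s Hs. rewrite (Dfun_eq d n tau times pos i sg s), (Dfun_eq d n tau times pos i ps s); auto.
      split. intros h. apply sqrt_inj; auto; apply maxR_ge0. intros h; rewrite h; auto. }
    split; auto. split. apply Eq; auto; lra.
    exists eps. split; auto. intros s Hs Hse Hne He. apply (Hiso s); auto. lra.
    apply Eq; auto; lra.
Qed.

Lemma locate : forall tau (times : nat -> R), (forall i, (i < tau)%nat -> times i < times (S i)) ->
  forall k t, (k <= tau)%nat -> times 0%nat <= t <= times k ->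
  (exists j, (j < S tau)%nat /\ t = times j) \/ (exists j, (j < tau)%nat /\ times j < t < times (S j)).
Proof.
  intros tau times Hinc k. induction k; intros t Hk Ht.
  - left. exists 0%nat. split. lia. lra.
  - destruct (Rle_dec t (times k)).
    + apply IHk. lia. lra.
    + destruct (Req_dec t (times (S k))).
      * left. exists (S k). split. lia. auto.
      * right. exists k. split. lia. lra.
Qed.

Lemma NoDup_len1 : forall (l : list R) c, NoDup l -> (forall x, In x l -> x = c) -> (length l <= 1)%nat.
Proof.
  intros l c Hnd H. destruct l as [|a [|b l]]; simpl; try lia.
  apply NoDup_cons_iff in Hnd as [H1 _]. exfalso. apply H1.
  rewrite (H a), (H b); simpl; auto.
Qed.

Lemma NoDup_map_snd : forall (l : list (nat * nat * R)) p, NoDup l ->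
  (forall e, In e l -> fst e = p) -> NoDup (map snd l).
Proof.
  induction l as [|e l IH]; intros p Hnd H; simpl. constructor.
  apply NoDup_cons_iff in Hnd as [H1 H2]. constructor.
  - intro Hin. apply in_map_iff in Hin as [[q' t'] [Heq Hin']]. destruct e as [q t].
    simpl in Heq. subst t'.
    assert (q = p) by (apply (H (q, t)); simpl; auto).
    assert (q' = p) by (apply (H (q', t)); simpl; auto). subst. apply H1; auto.
  - apply (IH p); auto. intros; apply H; simpl; auto.
Qed.

Definition ptb (times : nat -> R) j (t : R) : bool := if Req_EM_T t (times j) then true else false.
Definition opb (times : nat -> R) j (t : R) : bool :=
  if Rlt_dec (times j) t then if Rlt_dec t (times (S j)) then true else false else false.

Lemma pair_bound : forall d n tau times pos sg ps (Lp : list (nat * nat * R)),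
  piecewise_linear d n tau times pos -> (forall i, (i < tau)%nat -> times i < times (S i)) ->
  NoDup Lp -> (forall e, In e Lp -> fst e = (sg, ps)) ->
  (forall e, In e Lp -> is_intersection d n tau times pos sg ps (snd e)) ->
  (length Lp <= S tau + tau * (2 * (4 * n + 1)))%nat.
Proof.
  intros d n tau times pos sg ps Lp Hpl Hinc Hnd Hfst HI.
  set (Tl := map snd Lp).
  assert (HTl : NoDup Tl) by (apply (NoDup_map_snd Lp (sg, ps)); auto).
  assert (HI' : forall t, In t Tl -> is_intersection d n tau times pos sg ps t).
  { intros t Ht. apply in_map_iff in Ht as [e [<- He]]. auto. }
  replace (length Lp) with (length Tl) by apply length_map.
  eapply Nat.le_trans.
  apply (cover R Tl (S tau) tau (ptb times) (opb times)).
  - intros t Ht. destruct (HI' t Ht) as [_ [_ [Hr _]]].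
    destruct (locate tau times Hinc tau t ltac:(lia) Hr) as [[j [Hj Htj]]|[j [Hj Htj]]].
    + left. exists j. split; auto. unfold ptb. destruct (Req_EM_T t (times j)); auto.
    + right. exists j. split; auto. unfold opb.
      destruct (Rlt_dec (times j) t); [|lra]. destruct (Rlt_dec t (times (S j))); auto; lra.
  - apply Nat.add_le_mono.
    + eapply Nat.le_trans. apply (sumN_le _ _ (fun _ => 1%nat)).
      intros j Hj. apply (NoDup_len1 _ (times j)). apply NoDup_filter; auto.
      intros x Hx. apply filter_In in Hx as [_ Hx]. unfold ptb in Hx.
      destruct (Req_EM_T x (times j)); auto; discriminate.
      rewrite sumN_const. lia.
    + eapply Nat.le_trans. apply (sumN_le _ _ (fun _ => (2 * (4 * n + 1))%nat)).
      intros j Hj. apply (per_interval d n tau times pos j sg ps); auto.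
      apply NoDup_filter; auto.
      intros z Hz. apply filter_In in Hz as [Hz Hb]. split; auto.
      unfold opb in Hb. destruct (Rlt_dec (times j) z); [|discriminate].
      destruct (Rlt_dec z (times (S j))); [lra|discriminate].
      rewrite sumN_const. lia.
Qed.

Theorem mainTheorem11 :
  exists C : R, forall (d n tau : nat) (times : nat -> R)
    (pos : nat -> R -> point),
    (1 <= tau)%nat ->
    (forall i, (i < tau)%nat -> times i < times (S i)) ->
    piecewise_linear d n tau times pos ->
    forall L : list (nat * nat * R),
      NoDup L ->
      (forall sigma psi t, In (sigma, psi, t) L ->
         is_intersection d n tau times pos sigma psi t) ->
      INR (length L) <= C * INR tau * INR n ^ 3.
Proof.
  exists 12. intros d n tau times pos Htau Hinc Hpl L Hnd HL.
  assert (Hb : (length L <= n * (n * (S tau + tau * (2 * (4 * n + 1)))))%nat).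
  { eapply Nat.le_trans.
    apply (cover _ L n 0 (fun s e => Nat.eqb (fst (fst e)) s) (fun _ _ => false)).
    - intros [[s p] t] He. left. destruct (HL s p t He) as [Hsp [Hpn _]].
      exists s. split. lia. simpl. apply Nat.eqb_refl.
    - simpl. rewrite Nat.add_0_r. rewrite <- sumN_const. apply sumN_le. intros s Hs.
      eapply Nat.le_trans.
      apply (cover _ _ n 0 (fun p e => Nat.eqb (snd (fst e)) p) (fun _ _ => false)).
      + intros [[s' p] t] He. left. apply filter_In in He as [He _].
        destruct (HL s' p t He) as [Hsp [Hpn _]].
        exists p. split. lia. simpl. apply Nat.eqb_refl.
      + simpl. rewrite Nat.add_0_r. rewrite <- sumN_const. apply sumN_le. intros p Hp.
        apply (pair_bound d n tau times pos s p); auto.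
        * apply NoDup_filter, NoDup_filter; auto.
        * intros [[s' p'] t] He. apply filter_In in He as [He Hp'].
          apply filter_In in He as [_ Hs']. simpl in *.
          apply Nat.eqb_eq in Hp', Hs'. subst; auto.
        * intros [[s' p'] t] He. apply filter_In in He as [He Hp'].
          apply filter_In in He as [He Hs']. simpl in *.
          apply Nat.eqb_eq in Hp', Hs'. subst. apply HL; auto. }
  assert (Hb2 : (length L <= 12 * tau * n ^ 3)%nat).
  { eapply Nat.le_trans. apply Hb. destruct n. simpl; lia.
    assert (S tau <= 2 * tau)%nat by lia.
    simpl. nia. }
  apply le_INR in Hb2. rewrite !mult_INR, pow_INR in Hb2.
  replace (INR 12) with 12 in Hb2 by (simpl; ring). exact Hb2.
Qed.
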